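(* Let $H$ be a Hilbert space and $T$ a densely defined closed operator on $H$. If $T$ is a quasinormal EP operator, then $(T^{*}T)^{\dagger}T\subset T(T^{*}T)^{\dagger}$.
   Context: A densely defined closed operator $T$ on $H$ is EP if $R(T)$ is closed and $R(T)=R(T^{*})$; it is quasinormal if $T(T^{*}T)=(T^{*}T)T$. For a closed operator $A$ with closed range, $C(A)=D(A)\cap N(A)^{\perp}$ and the Moore–Penrose inverse $A^{\dagger}$ is defined on $R(A)\oplus^{\perp}R(A)^{\perp}$ by $A^{\dagger}y=(A|_{C(A)})^{-1}y$ for $y\in R(A)$ and $A^{\dagger}y=0$ for $y\in R(A)^{\perp}$. Products are on natural domains; $A\subset B$ means $D(A)\subset D(B)$ and $B|_{D(A)}=A$. *)

(* Defs.v *)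
(* Possibly unbounded operators are
   represented by their graphs (relations H -> H -> Prop). *)
From HB Require Import structures.
From mathcomp Require Import all_boot all_order all_algebra.
From mathcomp Require Import complex.
From mathcomp Require Import reals.
Set Implicit Arguments. Unset Strict Implicit. Unset Printing Implicit Defensive.
Import Order.TTheory GRing.Theory Num.Theory.
Local Open Scope ring_scope.

Section Hilbert.
Variables (R : realType) (H : lmodType R[i]) (ip : H -> H -> R[i]).

Definition hnorm (x : H) : R := Num.sqrt (complex.Re (ip x x)).

Definition hcvg (u : nat -> H) (x : H) : Prop :=
  forall e : R, 0 < e -> exists N : nat, forall n, (N <= n)%N -> hnorm (u n - x) < e.

Definition hcauchy (u : nat -> H) : Prop :=
  forall e : R, 0 < e -> exists N : nat,
    forall m n, (N <= m)%N -> (N <= n)%N -> hnorm (u m - u n) < e.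

Definition is_hilbert : Prop :=
  [/\ forall (a : R[i]) x y z, ip (a *: x + y) z = a * ip x z + ip y z,
      forall x y, ip y x = Num.conj (ip x y),
      forall x, 0 <= ip x x,
      forall x, ip x x = 0 -> x = 0
    & forall u, hcauchy u -> exists x, hcvg u x].

Definition hclosed (S : H -> Prop) : Prop :=
  forall (u : nat -> H) x, (forall n, S (u n)) -> hcvg u x -> S x.

Definition hdense (S : H -> Prop) : Prop :=
  forall x, exists u : nat -> H, (forall n, S (u n)) /\ hcvg u x.

Definition perp (S : H -> Prop) : H -> Prop :=
  fun y => forall x, S x -> ip x y = 0.

Definition op := H -> H -> Prop.

Definition is_linop (T : op) : Prop :=
  [/\ T 0 0,
      forall (a : R[i]) x y x' y', T x y -> T x' y' -> T (a *: x + x') (a *: y + y')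
    & forall x y y', T x y -> T x y' -> y = y'].

Definition dom (T : op) : H -> Prop := fun x => exists y, T x y.
Definition ran (T : op) : H -> Prop := fun y => exists x, T x y.
Definition ker (T : op) : H -> Prop := fun x => T x 0.

Definition closed_op (T : op) : Prop :=
  forall (u v : nat -> H) x y,
    (forall n, T (u n) (v n)) -> hcvg u x -> hcvg v y -> T x y.

Definition dd_closed (T : op) : Prop :=
  [/\ is_linop T, hdense (dom T) & closed_op T].

Definition adj (T : op) : op :=
  fun y z => forall x w, T x w -> ip w y = ip x z.

Definition opmul (A B : op) : op := fun x z => exists y, B x y /\ A y z.

Definition opsub (A B : op) : Prop := forall x y, A x y -> B x y.

Definition opeq (A B : op) : Prop := forall x y, A x y <-> B x y.

(* Moore--Penrose inverse: defined on R(A) (+) R(A)^perp by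
   A^dag y = (A|_{C(A)})^{-1} y on R(A), 0 on R(A)^perp,
   with C(A) = D(A) /\ N(A)^perp. *)
Definition mp (A : op) : op :=
  fun y x => exists y1 y2, [/\ y = y1 + y2, A x y1, perp (ker A) x & perp (ran A) y2].

Definition quasinormal (T : op) : Prop :=
  opeq (opmul T (opmul (adj T) T)) (opmul (opmul (adj T) T) T).

Definition EP (T : op) : Prop :=
  hclosed (ran T) /\ (forall y, ran T y <-> ran (adj T) y).

End Hilbert.

(* Main.v *)
Require Import Defs.
From HB Require Import structures.
From mathcomp Require Import all_boot all_order all_algebra.
From mathcomp Require Import complex.
From mathcomp Require Import reals.
From mathcomp Require Import ring lra.
From Stdlib Require Import IndefiniteDescription.
Import Order.TTheory GRing.Theory Num.Theory.
Local Open Scope ring_scope.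
Set Implicit Arguments. Unset Strict Implicit.

Section Gen.
Variables (R : realType) (V : lmodType R[i]) (ip : V -> V -> R[i]).
Local Open Scope complex_scope.
Hypothesis ipl : forall (a : R[i]) x y z, ip (a *: x + y) z = a * ip x z + ip y z.
Hypothesis ipc : forall x y, ip y x = Num.conj (ip x y).
Hypothesis ipp : forall x, 0 <= ip x x.

Lemma cjD (a b : R[i]) : Num.conj (a + b) = Num.conj a + Num.conj b.
Proof. exact: rmorphD. Qed.
Lemma cjM (a b : R[i]) : Num.conj (a * b) = Num.conj a * Num.conj b.
Proof. exact: rmorphM. Qed.
Lemma cjN (a : R[i]) : Num.conj (- a) = - Num.conj a.
Proof. exact: rmorphN. Qed.
Lemma cjK (a : R[i]) : Num.conj (Num.conj a) = a.
Proof. exact: conjCK. Qed.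
Lemma cjR (r : R) : Num.conj (r%:C) = r%:C.
Proof. exact: conjc_real. Qed.

Lemma ip0l z : ip 0 z = 0.
Proof.
have := ipl 1 0 0 z; rewrite scaler0 add0r mul1r.
by move/(congr1 (fun t => t - ip 0 z)); rewrite addrK subrr.
Qed.
Lemma ipDl x y z : ip (x + y) z = ip x z + ip y z.
Proof. by rewrite -[x]scale1r ipl mul1r scale1r. Qed.
Lemma ipZl a x z : ip (a *: x) z = a * ip x z.
Proof. by rewrite -[a *: x]addr0 ipl ip0l addr0. Qed.
Lemma ipNl x z : ip (- x) z = - ip x z.
Proof. by rewrite -scaleN1r ipZl mulN1r. Qed.
Lemma ipBl x y z : ip (x - y) z = ip x z - ip y z.
Proof. by rewrite ipDl ipNl. Qed.
Lemma ip0r z : ip z 0 = 0.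
Proof. by rewrite ipc ip0l; exact: conjc0. Qed.
Lemma ipDr x y z : ip z (x + y) = ip z x + ip z y.
Proof. by rewrite ipc ipDl cjD -!ipc. Qed.
Lemma ipZr a x z : ip z (a *: x) = Num.conj a * ip z x.
Proof. by rewrite ipc ipZl cjM -!ipc. Qed.
Lemma ipNr x z : ip z (- x) = - ip z x.
Proof. by rewrite ipc ipNl cjN -!ipc. Qed.
Lemma ipBr x y z : ip z (x - y) = ip z x - ip z y.
Proof. by rewrite ipDr ipNr. Qed.

Definition q v := complex.Re (ip v v).
Lemma qE v : (q v)%:C = ip v v.
Proof.
have h := ipp v. rewrite /q. rewrite [RHS]complexE (ger0_Im h). 
by rewrite mulr0 addr0.
Qed.
Lemma q_ge0 v : 0 <= q v.
Proof. by rewrite -ler0c qE. Qed.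

Ltac ipexp := rewrite ?(ipDl, ipBl, ipZl, ipDr, ipBr, ipZr, ipNl, ipNr, ip0l, ip0r).

Lemma RCD (a b : R) : (a + b)%:C = a%:C + b%:C :> R[i].
Proof. exact: rmorphD. Qed.
Lemma RCB (a b : R) : (a - b)%:C = a%:C - b%:C :> R[i].
Proof. exact: rmorphB. Qed.
Lemma RCN (a : R) : (- a)%:C = - a%:C :> R[i].
Proof. exact: rmorphN. Qed.
Lemma RCM (a b : R) : (a * b)%:C = a%:C * b%:C :> R[i].
Proof. exact: rmorphM. Qed.
Lemma RCn (n : nat) : (n%:R : R)%:C = n%:R :> R[i].
Proof. exact: rmorph_nat. Qed.
Lemma cjn (n : nat) : Num.conj (n%:R : R[i]) = n%:R.
Proof. exact: conjc_nat. Qed.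
Lemma cjV (a : R[i]) : Num.conj (a^-1) = (Num.conj a)^-1.
Proof. exact: conjc_inv. Qed.

Lemma para x p r : q (p - r) + 4%:R * q (x - 2^-1 *: (p + r)) =
   2%:R * q (x - p) + 2%:R * q (x - r).
Proof.
apply: complexI.
rewrite !(RCD, RCM, RCn) !qE; ipexp.
rewrite cjV cjn.
have h2 : (2:R[i]) != 0 by rewrite pnatr_eq0.
by field.
Qed.

Lemma para2 x p r : q (x - r) + q (x - (p + p - r)) = 2%:R * q (x - p) + 2%:R * q (p - r).
Proof.
apply: complexI.
rewrite !(RCD, RCM, RCn) !qE; ipexp.
ring.
Qed.

Lemma var_orth v k : (forall t : R[i], q v <= q (v - t *: k)) -> ip k v = 0.
Proof.
move=> hv.
set c := ip k v.
have hc0 : 0 <= c * Num.conj c by exact: mulcJ_ge0.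
set r := complex.Re (c * Num.conj c).
have hr : c * Num.conj c = r%:C.
  by rewrite /r {1}(complexE (c * Num.conj c)) (ger0_Im hc0) mulr0 addr0.
have r0 : 0 <= r by rewrite -ler0c -hr.
set e := (q k + 1)^-1.
have qk0 := q_ge0 k.
have e0 : 0 < e by rewrite invr_gt0; lra.
have ek : e * q k <= 1.
  rewrite /e mulrC ler_pdivrMr; [rewrite mul1r; lra| lra].
set t := e%:C * Num.conj c.
have E : (q (v - t *: k))%:C = (q v - 2%:R * e * r + e * e * r * q k)%:C.
  rewrite qE !(RCD, RCB, RCN, RCM, RCn); ipexp.
  rewrite (ipc k v) -!qE -/c -hr /t !cjM cjR cjK.
  ring.
have := hv t. rewrite (complexI E) => h.
have : e * r * (2%:R - e * q k) <= 0 by nra.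
move=> h2.
have rle : r <= 0.
  have h3 : 0 < 2%:R - e * q k by lra.
  rewrite leNgt; apply/negP => rp.
  have : 0 < e * r by exact: mulr_gt0.
  move=> er; have : 0 < e * r * (2%:R - e * q k) by exact: mulr_gt0.
  lra.
have rz : r = 0 by apply/eqP; rewrite eq_le rle r0.
move: hr; rewrite rz => /eqP; rewrite mulf_eq0 => /orP [/eqP //|].
by rewrite conjC_eq0 => /eqP.
Qed.

Lemma hnorm_lt v e : 0 < e -> q v < e ^+ 2 -> hnorm ip v < e.
Proof.
move=> e0 h; rewrite /hnorm -/(q v).
have -> : e = Num.sqrt (e ^+ 2) by rewrite sqrtr_sqr ger0_norm // ltW.
by rewrite ltr_sqrt // exprn_gt0.
Qed.

Lemma hnorm_lt' v e : 0 < e -> hnorm ip v < Num.sqrt e -> q v < e.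
Proof.
by move=> e0; rewrite /hnorm -/(q v) ltr_sqrt.
Qed.

Lemma archi_small (e : R) : 0 < e -> exists N : nat, forall n, (N <= n)%N -> (n.+1%:R)^-1 < e.
Proof.
move=> e0.
have ie : 0 < e^-1 by rewrite invr_gt0.
have hb := archi_boundP (ltW ie).
exists (Num.Def.archi_bound e^-1) => n hn.
rewrite -(invrK e) ltf_pV2 ?posrE ?invr_gt0 ?ltr0n //.
apply: (lt_le_trans hb); rewrite ler_nat; exact: leqW.
Qed.

Lemma le_eps (a b : R) : (forall e, 0 < e -> a <= b + e) -> a <= b.
Proof.
move=> h; rewrite leNgt; apply/negP => lt.
have := h ((a - b) / 2%:R) ltac:(lra). lra.
Qed.

Section Proj.
Variable M : V -> Prop.
Hypothesis M0 : M 0.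
Hypothesis Mlin : forall a x y, M x -> M y -> M (a *: x + y).
Hypothesis Mc : forall u, (forall n, M (u n)) -> hcauchy ip u -> exists x, M x /\ hcvg ip u x.

Lemma MZ a x : M x -> M (a *: x).
Proof. by move=> h; rewrite -[a *: x]addr0; apply: Mlin. Qed.
Lemma MD x y : M x -> M y -> M (x + y).
Proof. by move=> h1 h2; rewrite -[x]scale1r; apply: Mlin. Qed.
Lemma MN x : M x -> M (- x).
Proof. by move=> h; rewrite -scaleN1r; apply: MZ. Qed.
Lemma MB x y : M x -> M y -> M (x - y).
Proof. by move=> h1 h2; apply: MD => //; apply: MN. Qed.

Theorem proj_thm x : exists m, M m /\ forall k, M k -> ip k (x - m) = 0.
Proof.
pose E := fun r : R => exists m, M m /\ r = q (x - m).
have hE : classical_sets.has_inf E.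
  split; first by exists (q (x - 0)), 0.
  by exists 0 => r [m [_ ->]]; exact: q_ge0.
set d := inf E.
have dlb : forall m, M m -> d <= q (x - m).
  by move=> m hm; apply: (ge_inf hE.2); exists m.
have hex : forall n : nat, exists m, M m /\ q (x - m) < d + n.+1%:R^-1.
  move=> n; have [r [m [hm ->]] hr] := @inf_adherent R E (n.+1%:R^-1) ltac:(by rewrite invr_gt0 ltr0n) hE.
  by exists m.
pose ms := fun n => proj1_sig (constructive_indefinite_description _ (hex n)).
have hms : forall n, M (ms n) /\ q (x - ms n) < d + n.+1%:R^-1.
  by move=> n; exact: (proj2_sig (constructive_indefinite_description _ (hex n))).
have cauchy : hcauchy ip ms.
  move=> e e0.
  have [N hN] := @archi_small (e ^+ 2 / 4%:R) ltac:(by rewrite divr_gt0 // exprn_gt0).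
  exists N => a b ha hb; apply: hnorm_lt => //.
  have := para x (ms a) (ms b).
  have := dlb _ (MZ (2^-1) (MD (hms a).1 (hms b).1)).
  have := (hms a).2; have := (hms b).2.
  have := hN a ha; have := hN b hb.
  move: (e ^+ 2) (a.+1%:R^-1 : R) (b.+1%:R^-1 : R) => E2 ia ib; lra.
have [m [hm cvg]] := Mc (fun n => (hms n).1) cauchy.
have qm : q (x - m) <= d.
  apply: le_eps => e e0.
  have [N1 hN1] := @archi_small (e / 8%:R) ltac:(by rewrite divr_gt0).
  have [N2 hN2] := cvg (Num.sqrt (e / 8%:R)) ltac:(by rewrite sqrtr_gt0 divr_gt0).
  pose n := maxn N1 N2.
  have h1 := hN1 n (leq_maxl _ _).
  have h2 := hnorm_lt' (e := e / 8%:R) ltac:(by apply: divr_gt0) (hN2 n (leq_maxr _ _)).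
  have := para2 x (ms n) m.
  have := dlb _ (MB (MD (hms n).1 (hms n).1) hm).
  have := (hms n).2.
  have : 0 <= q (ms n - m) by exact: q_ge0.
  move: h1 h2; move: (n.+1%:R^-1 : R) => i; lra.
exists m; split => // k hk.
apply: var_orth => t.
have -> : x - m - t *: k = x - (t *: k + m) by rewrite opprD addrA addrAC.
apply: (le_trans qm); apply: dlb; exact: Mlin.
Qed.
End Proj.
End Gen.

Section Main.
Variables (R : realType) (H : lmodType R[i]) (ip : H -> H -> R[i]).
Hypothesis ipl : forall (a : R[i]) x y z, ip (a *: x + y) z = a * ip x z + ip y z.
Hypothesis ipc : forall x y, ip y x = Num.conj (ip x y).
Hypothesis ipp : forall x, 0 <= ip x x.
Hypothesis ipd : forall x, ip x x = 0 -> x = 0.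
Hypothesis hcomp : forall u, hcauchy ip u -> exists x, hcvg ip u x.
Variable T : op H.
Hypothesis T00 : T 0 0.
Hypothesis Tlin : forall (a : R[i]) x y x' y', T x y -> T x' y' -> T (a *: x + x') (a *: y + y').
Hypothesis Tcl : closed_op ip T.

Lemma cj0 : Num.conj (0 : R[i]) = 0.
Proof. exact: conjc0. Qed.

Lemma TD x y x' y' : T x y -> T x' y' -> T (x + x') (y + y').
Proof. by move=> h1 h2; rewrite -[x]scale1r -[y]scale1r; apply: Tlin. Qed.
Lemma TZ a x y : T x y -> T (a *: x) (a *: y).
Proof. by move=> h; have := Tlin a h T00; rewrite !addr0. Qed.
Lemma TB x y x' y' : T x y -> T x' y' -> T (x - x') (y - y').
Proof. by move=> h1 h2; have := Tlin (-1) h2 h1; rewrite !scaleN1r addrC (addrC (- y')). Qed.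

Definition ip2 (a b : (H * H)%type) : R[i] := ip a.1 b.1 + ip a.2 b.2.

Lemma ip2l : forall (a : R[i]) x y z, ip2 (a *: x + y) z = a * ip2 x z + ip2 y z.
Proof.
move=> a [x1 x2] [y1 y2] [z1 z2]; rewrite /ip2 /= !ipl; ring.
Qed.
Lemma ip2c : forall x y, ip2 y x = Num.conj (ip2 x y).
Proof. by move=> [x1 x2] [y1 y2]; rewrite /ip2 /= cjD -!ipc. Qed.
Lemma ip2p : forall x, 0 <= ip2 x x.
Proof. by move=> [x1 x2]; rewrite /ip2 /= addr_ge0. Qed.


Lemma q2E v : q ip2 v = q ip v.1 + q ip v.2.
Proof. by rewrite /q /ip2 raddfD. Qed.

Lemma G_complete (u : nat -> (H * H)%type) :
  (forall n, T (u n).1 (u n).2) -> hcauchy ip2 u ->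
  exists x, T x.1 x.2 /\ hcvg ip2 u x.
Proof.
move=> hT hc.
have c1 : hcauchy ip (fun n => (u n).1).
  move=> e e0; have [N hN] := hc e e0; exists N => m n hm hn.
  apply: le_lt_trans (hN m n hm hn); rewrite /hnorm -/(q ip _) -/(q ip2 _).
  rewrite ler_sqrt ?q2E /=; last by rewrite addr_ge0 ?q_ge0.
  by rewrite lerDl q_ge0.
have c2 : hcauchy ip (fun n => (u n).2).
  move=> e e0; have [N hN] := hc e e0; exists N => m n hm hn.
  apply: le_lt_trans (hN m n hm hn); rewrite /hnorm -/(q ip _) -/(q ip2 _).
  rewrite ler_sqrt ?q2E /=; last by rewrite addr_ge0 ?q_ge0.
  by rewrite lerDr q_ge0.
have [x1 cv1] := hcomp c1.
have [x2 cv2] := hcomp c2.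
exists (x1, x2); split.
  exact: (Tcl hT cv1 cv2).
move=> e e0.
have e20 : 0 < e ^+ 2 / 2%:R by rewrite divr_gt0 // exprn_gt0.
have s0 : 0 < Num.sqrt (e ^+ 2 / 2%:R) by rewrite sqrtr_gt0.
have [N1 hN1] := cv1 _ s0.
have [N2 hN2] := cv2 _ s0.
exists (maxn N1 N2) => n hn.
have h1 := hnorm_lt' e20 (hN1 n (leq_trans (leq_maxl _ _) hn)).
have h2 := hnorm_lt' e20 (hN2 n (leq_trans (leq_maxr _ _) hn)).
apply: hnorm_lt => //; rewrite q2E /=.
move: h1 h2; move: (e ^+ 2) => E2; lra.
Qed.

Lemma F n : perp ip (ran (adj ip T)) n -> T n 0.
Proof.
move=> hn.
pose M := fun p : (H * H)%type => T p.1 p.2.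
have M0 : M 0 by [].
have Mlin : forall (a : R[i]) x y, M x -> M y -> M (a *: x + y).
  by move=> a [x1 x2] [y1 y2]; rewrite /M /=; apply: Tlin.
have [[g1 g2] [Tg orth]] := proj_thm ip2l ip2c ip2p M0 Mlin G_complete (n, 0).
have hk : forall x w, T x w -> ip x (n - g1) + ip w (0 - g2) = 0.
  by move=> x w h; have := orth (x, w) h; rewrite /ip2 /=.
set a := n - g1 in hk *; set b := 0 - g2 in hk *.
have adjb : adj ip T b (- a).
  move=> x w h; rewrite (ipNr ipl ipc); have := hk x w h.
  by rewrite addrC => /eqP; rewrite addr_eq0 => /eqP.
have an : ip a n = 0.
  have := hn (- a) (ex_intro _ b adjb).
  by rewrite (ipNl ipl) => /eqP; rewrite oppr_eq0 => /eqP.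
have hh : ip a a + ip b b = 0.
  have ea : ip a a = ip n a - ip g1 a by rewrite {1}/a (ipBl ipl).
  have eb : ip b b = - ip g2 b by rewrite {1}/b (ipBl ipl) (ip0l ipl) sub0r.
  rewrite ea eb (ipc a n) an.
  have := hk g1 g2 Tg => e.
  by rewrite cj0 sub0r -opprD e oppr0.
move/eqP: hh; rewrite paddr_eq0 ?ipp // => /andP [/eqP /ipd a0 /eqP /ipd b0].
have e1 : n = g1 by apply: subr0_eq.
have e2 : g2 = 0 by move: b0; rewrite /b sub0r => /eqP; rewrite oppr_eq0 => /eqP.
by move: Tg; rewrite /= -e1 e2.
Qed.

Hypothesis hq : quasinormal ip T.
Hypothesis hEP : EP ip T.

Local Notation A := (opmul (adj ip T) T).

Lemma adjlin (a : R[i]) u v u' v' : adj ip T u v -> adj ip T u' v' ->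
  adj ip T (a *: u + u') (a *: v + v').
Proof.
move=> h1 h2 x w h; rewrite !(ipDr ipl ipc) !(ipZr ipl ipc).
by rewrite (h1 x w h) (h2 x w h).
Qed.
Lemma adjB u v u' v' : adj ip T u v -> adj ip T u' v' -> adj ip T (u - u') (v - v').
Proof. by move=> h1 h2; have := adjlin (-1) h2 h1; rewrite !scaleN1r addrC (addrC (- v')). Qed.
Lemma Alin a b a' b' : A a b -> A a' b' -> A (a - a') (b - b').
Proof.
move=> [u [Ta h1]] [u' [Ta' h2]]; exists (u - u'); split; [exact: TB | exact: adjB].
Qed.
Lemma kerA k : A k 0 -> T k 0.
Proof.
move=> [u [Tku h]]; have := h k u Tku; rewrite (ip0r ipl ipc) => /ipd u0.
by rewrite -u0.
Qed.
Lemma orthKR k v : T k 0 -> ran (adj ip T) v -> ip k v = 0.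
Proof. by move=> hk [b hb]; rewrite -(hb k 0 hk) (ip0l ipl). Qed.
Lemma perp_adj0 b : perp ip (ran T) b -> adj ip T b 0.
Proof. by move=> hb x w h; rewrite (ip0r ipl ipc); apply: hb; exists x. Qed.
Lemma Fp n : perp ip (ran T) n -> T n 0.
Proof. by move=> hn; apply: F => v hv; apply: hn; apply/hEP.2. Qed.

Lemma projT x : exists m, ran T m /\ forall k, ran T k -> ip k (x - m) = 0.
Proof.
have M0 : ran T 0 by exists 0.
have Mlin : forall (a : R[i]) x y, ran T x -> ran T y -> ran T (a *: x + y).
  by move=> a x1 y1 [p1 h1] [p2 h2]; exists (a *: p1 + p2); apply: Tlin.
have Mc : forall u, (forall n, ran T (u n)) -> hcauchy ip u -> exists x, ran T x /\ hcvg ip u x.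
  move=> u hu hc; have [x0 hx0] := hcomp hc; exists x0; split => //.
  exact: (hEP.1 u x0 hu hx0).
exact: (proj_thm ipl ipc ipp M0 Mlin Mc x).
Qed.

Lemma main : opsub (opmul (mp ip A) T) (opmul T (mp ip A)).
Proof.
move=> x z [y [Txy [y1 [y2 [ey Azy1 zperp y2perp]]]]].
have [x1 [Mx1 ox1]] := projT x.
have Tx2 : T (x - x1) 0 by apply: Fp.
have Tx1y : T x1 y by have := TB Txy Tx2; rewrite opprB subrKC subr0.
have [b adjb] : ran (adj ip T) x1 by apply/hEP.2.
have [b1 [Mb1 ob1]] := projT b.
have adjb1 : adj ip T b1 x1.
  by have := adjB adjb (perp_adj0 ob1); rewrite opprB subrKC subr0.
have [p Tpb1] := Mb1.
have [p1 [Mp1 op1]] := projT p.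
have Tp1 : T p1 b1 by have := TB Tpb1 (Fp op1); rewrite opprB subrKC subr0.
have Ap1 : A p1 x1 by exists b1.
exists p1; split.
  exists x1, (x - x1); split => //.
  - by rewrite subrKC.
  - by move=> k hk; apply: orthKR (kerA hk) _; apply/hEP.2.
  - move=> v [pp [u [Tu adjuv]]]; apply: ox1; apply/hEP.2; by exists u.
have : opmul T A p1 y by exists x1.
move/(hq p1 y) => [v [Tp1v Avy]].
have Avz := Alin Avy Azy1.
have y2e : y - y1 = y2 by rewrite ey addrC addKr.
rewrite y2e in Avz.
have y20 : y2 = 0 by apply: ipd; apply: y2perp; exists (v - z).
rewrite y20 in Avz.
have Tvz := kerA Avz.
have vz : v - z = 0.
  apply: ipd; rewrite (ipBr ipl ipc) (orthKR Tvz) ?(zperp _ Avz) ?subr0 //.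
  by apply/hEP.2; exists p1.
by rewrite -(subr0_eq vz).
Qed.
End Main.

Unset Implicit Arguments.
Theorem lemma2p16 (R : realType) (H : lmodType R[i]) (ip : H -> H -> R[i])
  (hH : is_hilbert ip) (T : op H)
  (hT : dd_closed ip T) (hq : quasinormal ip T) (hEP : EP ip T) :
  opsub (opmul (mp ip (opmul (adj ip T) T)) T)
        (opmul T (mp ip (opmul (adj ip T) T))).
Proof.
case: hH => ipl ipc ipp ipd hc.
case: hT => [[T00 Tlin _] _ Tcl].
exact: (main ipl ipc ipp ipd hc T00 Tlin Tcl hq hEP).
Qed.
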